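(* Let $m\ge 9$, $T=A_m$, $G\in\{A_m,S_m\}$, and let $H=(S_k\wr S_r)\cap G$ with $m=kr$ and $1<k<m$ be a maximal imprimitive subgroup of $G$. Consider $G$ acting on $\Omega$, the set of partitions of $\{1,\dots,m\}$ into $r$ subsets each of size $k$, so $n=\frac{(kr)!}{(k!)^r r!}$. Then $\mathrm{ifix}(T)>n^{1/2}$.
   Context: $\mathrm{ifix}(T)=\max\{\mathrm{fix}(t): t\in T \text{ an involution}\}$, where $\mathrm{fix}(t)$ is the number of points of $\Omega$ fixed by $t$. *)

(* Defs.v *)
From mathcomp Require Import all_boot all_fingroup all_solvable.
Set Implicit Arguments. Unset Strict Implicit. Unset Printing Implicit Defensive.


(* The natural action of permutations of 'I_m on sets of subsets of 'I_m:
   g maps a set system P to [set g @: B | B in P]. *)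
Definition part_act (m : nat) := (('P^*)^*)%act : action [set: {perm 'I_m}] {set {set 'I_m}}.

(* Omega = partitions of {0,..,m-1} into blocks all of size k
   (hence into r = m/k blocks when m = k*r). *)
Definition Omega (m k : nat) : {set {set {set 'I_m}}} :=
  [set P | partition P [set: 'I_m] && [forall B in P, #|B| == k]].

Definition fixnum (m k : nat) (t : {perm 'I_m}) : nat :=
  #|('Fix_(Omega m k | part_act m)[t])%g|.

Definition ifix (m k : nat) (T : {set {perm 'I_m}}) : nat :=
  \max_(t in T | #[t]%g == 2) fixnum k t.

(* Main.v *)
Require Import Defs.
From mathcomp Require Import all_boot all_fingroup all_solvable.
Set Implicit Arguments. Unset Strict Implicit. Unset Printing Implicit Defensive.
From mathcomp Require Import zify ring.

Fixpoint Nf (k fuel s : nat) : nat :=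
  if fuel is f.+1 then (if s is s'.+1 then 'C(s', k.-1) * Nf k f (s - k) else 1) else 1.
Definition N k s := Nf k s s.

Lemma Nf_eq k : 0 < k -> forall f s g, s <= f -> s <= g -> Nf k f s = Nf k g s.
Proof.
move=> k0; elim=> [|f IH] s g sf sg.
  by move: sf; rewrite leqn0 => /eqP->; case: g {sg}.
case: g sg => [|g] sg; first by move: sg; rewrite leqn0 => /eqP->.
case: s sf sg => [|s] sf sg //=.
by rewrite (IH _ g) //; lia.
Qed.

Lemma N_rec k s : 0 < k -> 0 < s -> N k s = 'C(s.-1, k.-1) * N k (s - k).
Proof.
move=> k0; case: s => // s _; rewrite /N /=; congr (_ * _).
by apply: Nf_eq => //; lia.
Qed.

Lemma N0 k : N k 0 = 1. Proof. by []. Qed.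

Section Comb.
Variable T : finType.
Variable k : nat.

Lemma card_sup (D X : {set T}) j : X \subset D -> #|X| <= j ->
  #|[set B : {set T} | [&& B \subset D, X \subset B & #|B| == j]]| = 'C(#|D| - #|X|, j - #|X|).
Proof.
move=> XD Xj.
have -> : #|D| - #|X| = #|D :\: X|.
  by rewrite cardsD (setIidPr XD).
rewrite -cards_draws.
have -> : [set B : {set T} | [&& B \subset D, X \subset B & #|B| == j]] =
   (fun A => X :|: A) @: [set A : {set T} | A \subset D :\: X & #|A| == j - #|X|].
  apply/setP=> B; rewrite inE; apply/idP/imsetP.
  - case/and3P=> BD XB /eqP Bj; exists (B :\: X).
      rewrite inE; apply/andP; split; first by apply: setSD.
      by rewrite cardsD (setIidPr XB) Bj.
    by apply/setP=> x; rewrite !inE; case: (boolP (x \in X)) => //= xX; rewrite (subsetP XB).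
  - case=> A; rewrite inE => /andP[AD /eqP Aj] ->.
    have dis : [disjoint X & A].
      rewrite -setI_eq0 -subset0; apply/subsetP=> x; rewrite !inE => /andP[xX xA].
      by move: (subsetP AD x xA); rewrite inE xX.
    rewrite subUset XD (subset_trans AD (subsetDl _ _)) subsetUl /=.
    by rewrite cardsU (disjoint_setI0 dis) cards0 subn0 Aj; apply/eqP; lia.
apply: card_in_imset => A1 A2; rewrite !inE => /andP[A1D _] /andP[A2D _] E.
apply/setP=> x; move/setP: E => /(_ x); rewrite !inE.
case: (boolP (x \in X)) => xX /=.
  move=> _; apply/idP/idP=> h.
    by move: (subsetP A1D x h); rewrite inE xX.
  by move: (subsetP A2D x h); rewrite inE xX.
by [].
Qed.


Definition Om (D : {set T}) : {set {set {set T}}} :=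
  [set P | partition P D && [forall B in P, #|B| == k]].

Lemma OmP (D : {set T}) (P : {set {set T}}) : reflect (partition P D /\ forall B, B \in P -> #|B| = k) (P \in Om D).
Proof.
rewrite inE; apply: (iffP andP) => [[h1 /forall_inP h2]|[h1 h2]]; split => //.
  by move=> B /h2 /eqP.
by apply/forall_inP => B /h2 ->.
Qed.

Lemma setUDK (B D : {set T}) : B \subset D -> B :|: (D :\: B) = D.
Proof.
move=> BD; apply/setP=> y; rewrite !inE; case: (boolP (y \in B)) => //= yB.
by rewrite (subsetP BD).
Qed.

Lemma fiber (D : {set T}) (x : T) (B : {set T}) (R : pred {set {set T}}) : x \in B -> B \subset D -> #|B| = k ->
  #|[set P in Om D | (pblock P x == B) && R P]| =
  #|[set Q in Om (D :\: B) | R (B |: Q)]|.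
Proof.
move=> xB BD Bk.
have Bn0 : B != set0 by apply/set0Pn; exists x.
have BnQ Q : Q \in Om (D :\: B) -> B \notin Q.
  case/OmP=> pQ _; apply/negP => BQ.
  by move: (subsetP (partitionS pQ BQ) x xB); rewrite inE xB.
rewrite -[RHS](@card_in_imset _ _ (fun Q => B |: Q)); last first.
  move=> Q1 Q2 /setIdP[h1 _] /setIdP[h2 _] E.
  by rewrite -(setU1K (BnQ _ h1)) E setU1K // BnQ.
apply: eq_card => P; apply/idP/imsetP.
- move=> /setIdP[PD /andP[/eqP pb RP]].
  have [pP kP] := OmP _ _ PD.
  have xc : x \in cover P by rewrite (cover_partition pP) (subsetP BD).
  have BP : B \in P by rewrite -pb pblock_mem.
  exists (P :\ B); last by rewrite setD1K.
  apply/setIdP; rewrite setD1K //; split => //; apply/OmP; split.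
    exact: partitionD1.
  by move=> C; rewrite inE => /andP[_ /kP].
- case=> Q /setIdP[QD RQ] ->.
  have [pQ kQ] := OmP _ _ QD.
  have dis : [disjoint B & D :\: B].
    by rewrite -setI_eq0 -subset0; apply/subsetP=> y; rewrite !inE => /andP[-> /andP[]].
  have pBQ := partitionU1 pQ Bn0 dis.
  rewrite setUDK // in pBQ.
  apply/setIdP; split; last (apply/andP; split => //).
    apply/OmP; split => // C /setU1P[->//|]; exact: kQ.
  rewrite (@def_pblock _ _ B _ (partition_trivIset pBQ)) //.
  by rewrite setU11.
Qed.


Definition Bl (D : {set T}) (x : T) : {set {set T}} :=
  [set B : {set T} | [&& B \subset D, [set x] \subset B & #|B| == k]].

Lemma pblock_Bl (D : {set T}) (x : T) (P : {set {set T}}) : x \in D -> P \in Om D -> pblock P x \in Bl D x.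
Proof.
move=> xD /OmP[pP kP].
have xc : x \in cover P by rewrite (cover_partition pP).
have BP := pblock_mem xc.
rewrite inE (partitionS pP BP) sub1set mem_pblock xc /= kP //.
Qed.

Lemma sum_blocks (D : {set T}) (x : T) (R : pred {set {set T}}) : x \in D ->
  #|[set P in Om D | R P]| =
  \sum_(B in Bl D x) #|[set P in Om D | (pblock P x == B) && R P]|.
Proof.
move=> xD.
rewrite -sum1_card (partition_big (fun P => pblock P x) (mem (Bl D x))); last first.
  by move=> P /setIdP[PD _]; apply: pblock_Bl.
apply: eq_bigr => B _; rewrite -sum1_card; apply: eq_bigl => P.
rewrite !inE; by case: (partition P D && _); case: (pblock P x == B); case: (R P).
Qed.


Lemma card_Bl (D : {set T}) (x : T) : x \in D -> 0 < k -> #|Bl D x| = 'C(#|D|.-1, k.-1).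
Proof.
move=> xD k0; rewrite /Bl card_sup ?sub1set ?cards1 //.
by congr 'C(_,_); lia.
Qed.

Lemma count_Om : 0 < k -> forall D : {set T}, #|Om D| = N k #|D|.
Proof.
move=> k0 D; have [n lt] := ubnP #|D|; elim: n D lt => // n IH D lt.
case: (set_0Vmem D) => [->|[x xD]].
  rewrite cards0 N0; apply/eq_card1 => P; rewrite !inE partition_set0.
  apply/andP/eqP => [[/eqP -> _]//|->]; split => //; by apply/forall_inP => B; rewrite inE.
have -> : Om D = [set P in Om D | predT P] by apply/setP=> P; rewrite !inE andbT.
rewrite (sum_blocks _ xD).
have Dpos : 0 < #|D| by apply/card_gt0P; exists x.
rewrite N_rec // -(card_Bl xD) // -sum_nat_const; apply: eq_bigr => B.
rewrite inE => /and3P[BD xB /eqP Bk].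
rewrite sub1set in xB.
rewrite fiber //.
have -> : [set Q in Om (D :\: B) | predT (B |: Q)] = Om (D :\: B)
  by apply/setP=> P; rewrite !inE andbT.
rewrite IH; last by rewrite cardsD (setIidPr BD); lia.
by rewrite cardsD (setIidPr BD) Bk.
Qed.

Lemma Bl_sub (D : {set T}) (x : T) (X : {set T}) (Q : pred {set T}) :
  (forall B, B \in Bl D x -> Q B = (X \subset B)) ->
  [set B in Bl D x | Q B] = [set B in Bl D x | X \subset B].
Proof. move=> h; apply/setP=> B; rewrite [LHS]inE [RHS]inE; case: (boolP (B \in Bl D x)) => // hB. by rewrite (h _ hB). Qed.

Lemma count_pb (D : {set T}) (x : T) (Q : pred {set T}) : x \in D -> 0 < k ->
  #|[set P in Om D | Q (pblock P x)]| = #|[set B in Bl D x | Q B]| * N k (#|D| - k).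
Proof.
move=> xD k0; rewrite (sum_blocks _ xD) -sum_nat_const big_mkcond /=.
rewrite [in RHS]big_mkcond /=; apply: eq_bigr => B _.
case: ifP => BB; rewrite inE BB //=.
move: (BB); rewrite inE => /and3P[BD xB /eqP Bk]; rewrite sub1set in xB.
case: (boolP (Q B)) => QB.
  have -> : [set P in Om D | (pblock P x == B) && Q (pblock P x)] =
     [set P in Om D | (pblock P x == B) && predT P].
    by apply/setP=> P; rewrite !inE; case: (boolP (pblock P x == B)) => //= /eqP->; rewrite QB.
  rewrite fiber //.
  have -> : [set Q in Om (D :\: B) | predT (B |: Q)] = Om (D :\: B)
    by apply/setP=> P; rewrite !inE andbT.
  by rewrite count_Om // cardsD (setIidPr BD) Bk.
apply: eq_card0 => P; rewrite !inE; case: (boolP (pblock P x == B)) => /=; last by rewrite andbF.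
by move/eqP->; rewrite (negbTE QB) andbF.
Qed.

Lemma pblockU1 (D B : {set T}) (Q : {set {set T}}) (c : T) :
  B \subset D -> B != set0 -> Q \in Om (D :\: B) -> c \in D :\: B ->
  pblock (B |: Q) c = pblock Q c.
Proof.
move=> BD Bn0 /OmP[pQ _] cD.
have dis : [disjoint B & D :\: B].
  by rewrite -setI_eq0 -subset0; apply/subsetP=> y; rewrite !inE => /andP[-> /andP[]].
have pBQ := partitionU1 pQ Bn0 dis.
have cc : c \in cover Q by rewrite (cover_partition pQ).
apply: (def_pblock (partition_trivIset pBQ)).
  by rewrite setU1r // pblock_mem.
by rewrite mem_pblock.
Qed.

Definition SS (D : {set T}) (a b c d : T) := [set P in Om D |
  [&& b \in pblock P a, c \notin pblock P a, d \notin pblock P a & d \in pblock P c]].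

Lemma count_S (D : {set T}) (a b c d : T) : 2 <= k ->
  uniq [:: a; b; c; d] -> [set a; b; c; d] \subset D ->
  #|SS D a b c d| = 'C(#|D| - 4, k - 2) * ('C(#|D| - k - 2, k - 2) * N k (#|D| - k - k)).
Proof.
move=> k2 /= U sD.
have aD : a \in D by apply: (subsetP sD); rewrite !inE eqxx.
have bD : b \in D by apply: (subsetP sD); rewrite !inE eqxx !orbT.
have cD : c \in D by apply: (subsetP sD); rewrite !inE eqxx !orbT.
have dD : d \in D by apply: (subsetP sD); rewrite !inE eqxx !orbT.
move: U; rewrite !inE !negb_or => /and4P[/and3P[ab ac ad] /andP[bc bd] cd _].
rewrite /SS (sum_blocks _ aD).
pose QB (B : {set T}) := [&& b \in B, c \notin B & d \notin B].
pose K := 'C(#|D| - k - 2, k - 2) * N k (#|D| - k - k).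
transitivity (\sum_(B in Bl D a) (if QB B then K else 0)).
  apply: eq_bigr => B; rewrite inE => /and3P[BD xB /eqP Bk]; rewrite sub1set in xB.
  have Bn0 : B != set0 by apply/set0Pn; exists a.
  rewrite /QB; case: (boolP [&& b \in B, c \notin B & d \notin B]) => QBB; last first.
    apply: eq_card0 => P; rewrite !inE; case: (boolP (pblock P a == B)) => /=; last by rewrite andbF.
    by move/eqP=> ->; move: QBB; case: (b \in B); case: (c \in B); case: (d \in B); rewrite ?andbF.
  move: (QBB) => /and3P[bB cB dB].
  have -> : [set P in Om D | (pblock P a == B) &&
     [&& b \in pblock P a, c \notin pblock P a, d \notin pblock P a & d \in pblock P c]] =
     [set P in Om D | (pblock P a == B) && (fun P => d \in pblock P c) P].
    apply/setP=> P; rewrite !inE; case: (boolP (pblock P a == B)) => /=; last by rewrite !andbF.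
    by move/eqP=> ->; rewrite bB cB dB.
  rewrite fiber //.
  have cDB : c \in D :\: B by rewrite inE cB cD.
  have -> : #|[set Q in Om (D :\: B) | (fun P => d \in pblock P c) (B |: Q)]| =
            #|[set Q in Om (D :\: B) | d \in pblock Q c]|.
    apply: eq_card => Q; apply/setIdP/setIdP => -[QO h]; split => //;
    by rewrite (pblockU1 BD Bn0 QO cDB) in h *.
  have h := @count_pb _ _ (fun C => d \in C) cDB; rewrite /= in h; rewrite h; last by clear -k2; lia.
  rewrite cardsD (setIidPr BD) Bk /K; congr (_ * _).
  have -> : [set C in Bl (D :\: B) c | d \in C] =
     [set C : {set T} | [&& C \subset D :\: B, [set c; d] \subset C & #|C| == k]].
    apply/setP=> C; rewrite !inE subUset !sub1set; by case: (C \subset _); case: (c \in C); case: (d \in C); case: (_ == k).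
  rewrite card_sup; last by rewrite cards2 cd.
    by rewrite cardsD (setIidPr BD) cards2 cd Bk; congr 'C(_,_); clear; lia.
  by rewrite subUset !sub1set !inE cB cD dB dD.
rewrite -big_mkcondr /= (eq_bigl (mem [set B in Bl D a | QB B])); last by move=> B; rewrite !inE.
rewrite sum_nat_const; congr (_ * _).
have -> : [set B in Bl D a | QB B] =
   [set B : {set T} | [&& B \subset D :\: [set c; d], [set a; b] \subset B & #|B| == k]].
  apply/setP=> B; rewrite !inE /QB subUset !sub1set; apply/idP/idP.
  - case/and4P => /and3P[BD aB /eqP Bk] bB cB dB.
    rewrite aB bB Bk eqxx !andbT /=; apply/subsetP => y yB; rewrite !inE (subsetP BD) // andbT.
    by apply/negP => /orP[] /eqP E; [move: cB | move: dB]; rewrite -E yB.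
  - case/and3P => /subsetP BD /andP[aB bB] /eqP Bk.
    have BD' : B \subset D by apply/subsetP=> y /BD; rewrite inE => /andP[].
    rewrite BD' aB bB Bk eqxx /=.
    by apply/andP; split; apply/negP => /BD; rewrite !inE eqxx ?orbT.
rewrite card_sup; last by rewrite cards2 ab.
  rewrite cardsD cards2 ab.
  have -> : #|D :&: [set c; d]| = 2 by rewrite (setIidPr _) ?cards2 ?cd // subUset !sub1set cD dD.
  by congr 'C(_,_); clear; lia.
by rewrite subUset !sub1set !inE aD bD !negb_or ac ad bc bd.
Qed.

End Comb.

Section Fixed.
Variable T : finType.
Implicit Types (P : {set {set T}}) (t : {perm T}) (B : {set T}).

Lemma imset_closed t B : (forall y, y \in B -> t y \in B) -> t @: B = B.
Proof.
move=> h; apply/eqP; rewrite eqEcard card_imset; last exact: perm_inj.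
rewrite leqnn andbT; apply/subsetP=> _ /imsetP[y yB ->]; exact: h.
Qed.

Lemma perm_fixP P t : (forall B, B \in P -> t @: B \in P) ->
  [set (fun B : {set T} => t @: B) B | B in P] = P.
Proof.
move=> h; apply/eqP; rewrite eqEcard card_imset; last by apply: imset_inj; apply: perm_inj.
rewrite leqnn andbT; apply/subsetP=> _ /imsetP[B BP ->]; exact: h.
Qed.

Lemma crit_U P t (U : {set T}) : partition P setT ->
  (forall v, v \notin U -> t v = v) -> (forall u, u \in U -> t @: pblock P u \in P) ->
  forall B, B \in P -> t @: B \in P.
Proof.
move=> pP tU hU B BP.
case: (set_0Vmem (B :&: U)) => [E|[u]].
  rewrite imset_closed // => y yB; rewrite tU //.
  by apply/negP => yU; move/setP: E => /(_ y); rewrite !inE yB yU.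
rewrite inE => /andP[uB uU].
by rewrite -(def_pblock (partition_trivIset pP) BP uB); apply: hU.
Qed.

Lemma pb_in P x : partition P setT -> x \in pblock P x.
Proof. by move=> pP; rewrite mem_pblock (cover_partition pP) inE. Qed.

Lemma pb_mem P x : partition P setT -> pblock P x \in P.
Proof. by move=> pP; rewrite pblock_mem // (cover_partition pP) inE. Qed.

Lemma pb_same P x y : partition P setT -> y \in pblock P x -> pblock P y = pblock P x.
Proof. by move=> pP; apply: same_pblock; apply: partition_trivIset pP. Qed.

Lemma famB (t : {perm T}) (a1 y z w : T) P : partition P setT -> (forall B, B \in P -> #|B| = 2) ->
  a1 != y -> z != w -> y \in pblock P a1 -> w \in pblock P z ->
  (forall v, v \notin [set a1; y; z; w] -> t v = v) ->
  t @: [set a1; y] \in [set [set a1; y]; [set z; w]] ->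
  t @: [set z; w] \in [set [set a1; y]; [set z; w]] ->
  forall B, B \in P -> t @: B \in P.
Proof.
move=> pP k2 a1y zw yA wZ tv tA tZ.
have eA : pblock P a1 = [set a1; y].
  apply/esym/eqP; rewrite eqEcard subUset !sub1set pb_in // yA /= cards2 a1y.
  by rewrite k2 // pb_mem.
have eZ : pblock P z = [set z; w].
  apply/esym/eqP; rewrite eqEcard subUset !sub1set pb_in // wZ /= cards2 zw.
  by rewrite k2 // pb_mem.
have AP : [set a1; y] \in P by rewrite -eA pb_mem.
have ZP : [set z; w] \in P by rewrite -eZ pb_mem.
have sub : [set [set a1; y]; [set z; w]] \subset P by rewrite subUset !sub1set AP ZP.
apply: (crit_U pP tv) => u; rewrite !inE => /orP[/orP[/orP[]|]|] /eqP->.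
- by rewrite eA (subsetP sub).
- by rewrite (pb_same pP yA) eA (subsetP sub).
- by rewrite eZ (subsetP sub).
- by rewrite (pb_same pP wZ) eZ (subsetP sub).
Qed.

Variables a b c d : T.
Hypotheses (ab : a != b) (ac : a != c) (ad : a != d) (bc : b != c) (bd : b != d) (cd : c != d).
Let t := (tperm a b * tperm c d)%g.

Lemma tvals : [/\ t a = b, t b = a, t c = d, t d = c &
   forall v, v \notin [set a; b; c; d] -> t v = v].
Proof using ab ac ad bc bd cd.
rewrite /t !permM tpermL tpermR (tpermD (x:=c) (y:=d) (z:=b)) ?(eq_sym c) ?(eq_sym d) //.
rewrite (tpermD (x:=c) (y:=d) (z:=a)) ?(eq_sym c) ?(eq_sym d) //.
rewrite (tpermD (x:=a) (y:=b) (z:=c)) // (tpermD (x:=a) (y:=b) (z:=d)) // tpermL tpermR.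
split => // v; rewrite !inE => /norP[/norP[/norP[va vb] vc] vd].
rewrite eq_sym in va; rewrite eq_sym in vb; rewrite eq_sym in vc; rewrite eq_sym in vd.
by rewrite permM !tpermD.
Qed.


Lemma caseU y : y = a \/ y = b \/ y = c \/ y = d \/ t y = y.
Proof using ab ac ad bc bd cd.
have [_ _ _ _ tv] := tvals.
case: (eqVneq y a) => [->|ya]; first by left.
case: (eqVneq y b) => [->|yb]; first by right; left.
case: (eqVneq y c) => [->|yc]; first by do 2 right; left.
case: (eqVneq y d) => [->|yd]; first by do 3 right; left.
by do 4 right; apply: tv; rewrite !inE (negbTE ya) (negbTE yb) (negbTE yc) (negbTE yd).
Qed.

Lemma famA P : partition P setT -> b \in pblock P a -> c \notin pblock P a ->
  d \notin pblock P a -> d \in pblock P c -> forall B, B \in P -> t @: B \in P.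
Proof using ab ac ad bc bd cd.
move=> pP bA cA dA dC.
have [ta tb tc td tv] := tvals.
have aA := pb_in a pP; have cC := pb_in c pP.
have pbb := pb_same pP bA; have pbd := pb_same pP dC.
have aC : a \notin pblock P c.
  by apply/negP => /(pb_same pP) E; move: cA; rewrite E cC.
have bC : b \notin pblock P c.
  by apply/negP => /(pb_same pP); rewrite pbb => E; move: cA; rewrite E cC.
have tA : t @: pblock P a = pblock P a.
  apply: imset_closed => y yA; case: (caseU y) => [E|[E|[E|[E|->]]]] //; move: yA; rewrite E => yA.
  - by rewrite ta.
  - by rewrite tb.
  - by rewrite yA in cA.
  - by rewrite yA in dA.
have tC : t @: pblock P c = pblock P c.
  apply: imset_closed => y yC; case: (caseU y) => [E|[E|[E|[E|->]]]] //; move: yC; rewrite E => yC.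
  - by rewrite yC in aC.
  - by rewrite yC in bC.
  - by rewrite tc.
  - by rewrite td.
apply: (crit_U pP tv) => u; rewrite !inE => /orP[/orP[/orP[]|]|] /eqP->.
- by rewrite tA pb_mem.
- by rewrite pbb tA pb_mem.
- by rewrite tC pb_mem.
- by rewrite pbd tC pb_mem.
Qed.

End Fixed.
Section Arith. Local Unset Implicit Arguments.
Lemma bin_ge_n n j : 0 < j -> j < n -> n <= 'C(n, j).
Proof.
elim: n j => [|n IH] j j0 jn; first by [].
case: j j0 jn => [|j] // _ jn.
case: j jn => [|j] jn; first by rewrite bin1.
rewrite binS.
have h1 := IH j.+1 isT ltac:(lia).
have h2 : 0 < 'C(n, j.+2) by rewrite bin_gt0; lia.
lia.
Qed.

Lemma bin_ge_2 n j : 2 <= j -> j + 2 <= n -> 'C(n, 2) <= 'C(n, j).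
Proof.
elim: n j => [|n IH] j j2 jn; first by lia.
case: j j2 jn => [|[|j]] // j2 jn.
case: j j2 jn => [|j] _ jn; first by [].
rewrite binS [X in _ <= X]binS.
have h1 := IH j.+2 isT ltac:(lia).
have h2 := bin_ge_n n (j.+3) isT ltac:(lia).
rewrite bin1; lia.
Qed.

Lemma key m k M : 3 <= k -> 2 * k <= m -> 0 < M ->
  (m-1)*(m-2)*(m-3) < (k-1)*(k-1)*(m-k)*('C(m-4,k-2)*'C(m-k-2,k-2)) ->
  'C(m-1,k-1) * ('C(m-k-1,k-1) * M) < ('C(m-4,k-2) * ('C(m-k-2,k-2) * M))^2.
Proof.
move=> k3 km M0 H.
have e1 : (m-1) * 'C(m-2,k-2) = (k-1) * 'C(m-1,k-1).
  have := mul_bin_diag (m-1) (k-2).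
  have -> : (m-1).-1 = m-2 by lia.
  have -> : (k-2).+1 = k-1 by lia. done.
have e2 : (m-2) * 'C(m-3,k-2) = (m-k) * 'C(m-2,k-2).
  have := mul_bin_down (m-2) (k-2).
  have -> : (m-2).-1 = m-3 by lia.
  have -> : m-2-(k-2) = m-k by lia. done.
have e3 : (m-3) * 'C(m-4,k-2) = (m-k-1) * 'C(m-3,k-2).
  have := mul_bin_down (m-3) (k-2).
  have -> : (m-3).-1 = m-4 by lia.
  have -> : m-3-(k-2) = m-k-1 by lia. done.
have e4 : (m-k-1) * 'C(m-k-2,k-2) = (k-1) * 'C(m-k-1,k-1).
  have := mul_bin_diag (m-k-1) (k-2).
  have -> : (m-k-1).-1 = m-k-2 by lia.
  have -> : (k-2).+1 = k-1 by lia. done.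
have xpos : 0 < 'C(m-4,k-2) by rewrite bin_gt0; lia.
have ypos : 0 < 'C(m-k-2,k-2) by rewrite bin_gt0; lia.
move: H e1 e2 e3 e4 xpos ypos.
set x := 'C(m-4,k-2); set y := 'C(m-k-2,k-2); set u := 'C(m-2,k-2); set v := 'C(m-3,k-2).
set C1 := 'C(m-1,k-1); set C2 := 'C(m-k-1,k-1).
have : 2 <= k - 1 by lia.
have : k <= m - k by lia.
have : 2 <= m - k - 1 by lia.
set p1 := m-1; set p2 := m-2; set p3 := m-3; set q := m-k; set q1 := m-k-1; set k1 := k-1.
move: p1 p2 p3 q q1 k1 x y u v C1 C2 => p1 p2 p3 q q1 k1 x y u v C1 C2 Eq1 kq k1g H e1 e2 e3 e4 xp yp.
have E : k1*k1*q*q1*(C1*C2) = p1*p2*p3*x*(q1*y).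
  have -> : k1*k1*q*q1*(C1*C2) = (k1*C1)*q*q1*(k1*C2) by ring.
  rewrite -e1 -e4.
  have -> : p1*u*q*q1*(q1*y) = p1*(q*u)*q1*(q1*y) by ring.
  rewrite -e2.
  have -> : p1*(p2*v)*q1*(q1*y) = p1*p2*(q1*v)*(q1*y) by ring.
  by rewrite -e3; ring.
have q1p : 0 < q1 by lia.
have P0 : 0 < k1*k1*q*q1 by rewrite !muln_gt0; lia.
have L : k1*k1*q*q1*(C1*C2) < k1*k1*q*q1*(x*y)^2.
  rewrite E.
  have : p1*p2*p3 * (x*(q1*y)) < k1*k1*q*(x*y) * (x*(q1*y)).
    rewrite ltn_pmul2r //; rewrite !muln_gt0; lia.
  have -> : k1 * k1 * q * q1 * (x * y) ^ 2 = k1*k1*q*(x*y) * (x*(q1*y)) by ring.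
  by have -> : p1 * p2 * p3 * x * (q1 * y) = p1*p2*p3 * (x*(q1*y)) by ring.
rewrite ltn_pmul2l // in L.
have : (x*y)^2 * M <= (x*(y*M))^2.
  have -> : (x*(y*M))^2 = (x*y)^2 * M * M by ring.
  by rewrite leq_pmulr.
have : C1 * C2 * M < (x*y)^2 * M by rewrite ltn_pmul2r.
rewrite mulnA. lia.
Qed.
Lemma H3 m k : 3 <= k -> 3*k <= m -> (m-1)*(m-2)*(m-3) < (k-1)*(k-1)*(m-k)*((m-4)*(m-k-2)).
Proof.
move=> k3 km.
have [i ki] : exists i, k = i + 3 by exists (k-3); lia.
subst k.
have [e me] : exists e, m = 3*(i+3) + e by exists (m - 3*(i+3)); lia.
subst m.
have -> : 3 * (i + 3) + e - 1 = 3*i+e+8 by lia.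
have -> : 3 * (i + 3) + e - 2 = 3*i+e+7 by lia.
have -> : 3 * (i + 3) + e - 3 = 3*i+e+6 by lia.
have -> : 3 * (i + 3) + e - 4 = 3*i+e+5 by lia.
have -> : 3 * (i + 3) + e - (i+3) = 2*i+e+6 by lia.
have -> : 2*i+e+6-2 = 2*i+e+4 by lia.
have -> : i + 3 - 1 = i + 2 by lia.
nia.
Qed.

Lemma H2 k x : 5 <= k -> (2*k-4)*(2*k-5) <= 2*x ->
  (2*k-1)*(2*k-2)*(2*k-3) < (k-1)*(k-1)*k*x.
Proof.
move=> k5 hx.
have [i ki] : exists i, k = i + 5 by exists (k-5); lia.
subst k. move: hx.
have -> : 2*(i+5)-4 = 2*i+6 by lia.
have -> : 2*(i+5)-5 = 2*i+5 by lia.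
have -> : 2*(i+5)-1 = 2*i+9 by lia.
have -> : 2*(i+5)-2 = 2*i+8 by lia.
have -> : 2*(i+5)-3 = 2*i+7 by lia.
have -> : i+5-1 = i+4 by lia.
nia.
Qed.

Lemma Hk2 m N4 N8 : 10 <= m -> N4 = (m-5)*((m-7)*N8) -> 0 < N8 ->
  (m-1)*((m-3)*N4) < (3*N4)^2.
Proof.
move=> m10 e N8p.
have [i mi] : exists i, m = i + 10 by exists (m-10); lia.
subst m.
move: e; have -> : i+10-5 = i+5 by lia. have -> : i+10-7 = i+3 by lia.
have -> : i+10-1 = i+9 by lia. have -> : i+10-3 = i+7 by lia.
move=> ->. nia.
Qed.
End Arith.

Lemma N_pos k j : 0 < k -> 0 < N k (k * j).
Proof.
move=> k0; elim: j => [|j IH]; first by rewrite muln0.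
rewrite N_rec //; last by rewrite muln_gt0 k0.
have -> : k * j.+1 - k = k * j by rewrite mulnS addKn.
rewrite muln_gt0 IH andbT bin_gt0 mulnS; lia.
Qed.

Theorem proposition2p5 (m k r : nat) (G H : {group {perm 'I_m}}) :
  9 <= m -> m = k * r -> 1 < k < m ->
  (G = Alt 'I_m :> {set _} \/ G = Sym 'I_m :> {set _}) ->
  (exists2 P0, P0 \in Omega m k & (H :=: ('C_G[P0 | part_act m])%g)%g) ->
  maximal H G ->
  #|Omega m k| < ifix k (Alt 'I_m) ^ 2.
Proof.
move=> m9 mkr /andP[k1 km] _ _ _.
have k0 : 0 < k by lia.
have r2 : 2 <= r by nia.
have k2m : 2 * k <= m by rewrite mkr mulnC leq_mul2l r2 orbT.
have h0 : 0 < m by lia. have h1 : 1 < m by lia. have h2 : 2 < m by lia. have h3 : 3 < m by lia.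
pose a : 'I_m := Ordinal h0. pose b : 'I_m := Ordinal h1.
pose c : 'I_m := Ordinal h2. pose d : 'I_m := Ordinal h3.
have ab : a != b by []. have ac : a != c by []. have ad : a != d by [].
have bc : b != c by []. have bd : b != d by []. have cd : c != d by [].
pose t := (tperm a b * tperm c d)%g.
have [ta tb tc td tv] := tvals ab ac ad bc bd cd.
have tAlt : t \in Alt 'I_m by rewrite Alt_even odd_permM !odd_tperm (negbTE ab) (negbTE cd).
have tt : (t * t = 1)%g.
  apply/permP => x; rewrite permM perm1.
  case: (caseU ab ac ad bc bd cd x) => [->|[->|[->|[->|E]]]].
  - by rewrite ta tb. - by rewrite tb ta. - by rewrite tc td. - by rewrite td tc.
  - by rewrite E E.
have tord : #[t]%g == 2.
  have : (#[t]%g %| 2) by rewrite order_dvdn expgS expg1 tt.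
  have : #[t]%g != 1.
    rewrite order_eq1; apply/eqP => /permP /(_ a); rewrite ta perm1 => /eqP; by rewrite eq_sym (negbTE ab).
  have := order_gt0 t.
  move=> p1 n1 /dvdn_leq le2; have := le2 isT; move=> {}le2; apply/eqP; lia.
have Hfix : forall S : {set {set {set 'I_m}}}, S \subset Omega m k ->
    (forall P, P \in S -> forall B, B \in P -> t @: B \in P) -> #|S| <= ifix k (Alt 'I_m).
  move=> S SO Sfix.
  have hmax := @leq_bigmax_cond _ (fun s => (s \in Alt 'I_m) && (#[s]%g == 2)) (fixnum k) t (introT andP (conj tAlt tord)).
  apply: (leq_trans _ hmax).
  rewrite /fixnum; apply: subset_leq_card; apply/subsetP => P PS.
  rewrite inE (subsetP SO) //=; apply/afix1P.
  by apply: (perm_fixP (Sfix P PS)).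
have nE : #|Omega m k| = N k m by rewrite (count_Om k0 [set: 'I_m]) cardsT card_ord.
have sub4 : [set a; b; c; d] \subset [set: 'I_m] by apply: subsetT.
have Mpos : 0 < N k (m - k - k).
  have -> : m - k - k = k * (r - 2) by rewrite mkr; rewrite mulnBr; lia.
  exact: N_pos.
have ifx : forall F, #|Omega m k| < F ^ 2 -> F <= ifix k (Alt 'I_m) -> #|Omega m k| < ifix k (Alt 'I_m) ^ 2.
  move=> F h1' h2'; apply: (leq_trans h1'); by rewrite leq_exp2r.
have U4 : uniq [:: a; b; c; d] by [].
case: (ltnP 2 k) => [k3|k2].
  have SO : SS k [set: 'I_m] a b c d \subset Omega m k.
    by apply/subsetP => P /setIdP[].
  have Hs := Hfix _ SO.
  have cS := count_S (k:=k) (ltnW k3) U4 sub4.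
  have Fle : #|SS k [set: 'I_m] a b c d| <= ifix k (Alt 'I_m).
    apply: Hs => P /setIdP[/OmP[pP _] /and4P[bA cA dA dC]].
    exact: (famA ab ac ad bc bd cd pP bA cA dA dC).
  rewrite cardsT card_ord in cS.
  apply: (ifx _ _ Fle); rewrite cS nE.
  rewrite N_rec // (N_rec (s := m-k)) //; last by rewrite subn_gt0.
  rewrite -!subn1.
  apply: key => //.
  case: (ltnP 2 r) => [r3|r2'].
    have k3m : 3 * k <= m by rewrite mkr mulnC leq_mul2l r3 orbT.
    apply: (leq_trans (H3 m k k3 k3m)); rewrite leq_mul2l; apply/orP; right.
    apply: leq_mul; apply: bin_ge_n; clear -k3 k3m; lia.
  have r2e : r = 2 by clear -r2 r2'; lia.
  have mE : m = 2 * k by rewrite mkr r2e mulnC.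
  have k5 : 5 <= k by clear -mE m9; lia.
  rewrite mE.
  have -> : 2 * k - k - 2 = k - 2 by clear; lia.
  have -> : 2 * k - k = k by clear; lia.
  rewrite binn muln1.
  apply: H2 => //.
  have -> : 2 * k - 4 = m - 4 by rewrite mE.
  have -> : 2 * k - 5 = (m - 4) - 1 by rewrite mE; clear; lia.
  have e := mul_bin_diag (m - 4) 1; rewrite bin1 in e.
  rewrite subn1 e leq_mul2l /=.
  apply: bin_ge_2; clear -k5 mE; lia.
have ke : k = 2 by clear -k1 k2; lia.
subst k.
have r5 : 5 <= r by clear -m9 mkr; lia.
have m10 : 10 <= m by clear -r5 mkr; lia.
pose S1 := SS 2 [set: 'I_m] a b c d.
pose S2 := SS 2 [set: 'I_m] a c b d.
pose S3 := SS 2 [set: 'I_m] a d b c.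
have c1 : #|S1| = N 2 (m - 4).
  rewrite /S1 (count_S (k:=2) (isT : 2 <= 2) U4 sub4) cardsT card_ord bin0 !mul1n.
  have -> : m - 2 - 2 = m - 4 by clear; lia.
  by rewrite subnn bin0 mul1n.
have c2 : #|S2| = N 2 (m - 4).
  rewrite /S2 (count_S (k:=2) (isT : 2 <= 2) (_ : uniq [:: a; c; b; d]) (subsetT _)) // cardsT card_ord bin0 !mul1n.
  have -> : m - 2 - 2 = m - 4 by clear; lia.
  by rewrite subnn bin0 mul1n.
have c3 : #|S3| = N 2 (m - 4).
  rewrite /S3 (count_S (k:=2) (isT : 2 <= 2) (_ : uniq [:: a; d; b; c]) (subsetT _)) // cardsT card_ord bin0 !mul1n.
  have -> : m - 2 - 2 = m - 4 by clear; lia.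
  by rewrite subnn bin0 mul1n.
have d12 : S1 :&: S2 = set0.
  apply/eqP; rewrite -subset0; apply/subsetP => P; rewrite inE.
  move=> /andP[/setIdP[_ /and4P[_ cA _ _]] /setIdP[_ /and4P[cA' _ _ _]]].
  by rewrite cA' in cA.
have d3 : (S1 :|: S2) :&: S3 = set0.
  apply/eqP; rewrite -subset0; apply/subsetP => P; rewrite inE.
  move=> /andP[/setUP[|] /setIdP[_ /and4P[_ _ dA _]] /setIdP[_ /and4P[dA' _ _ _]]];
  by rewrite dA' in dA.
have cS : #|S1 :|: S2 :|: S3| = 3 * N 2 (m - 4).
  rewrite cardsU d3 cards0 subn0 cardsU d12 cards0 subn0 c1 c2 c3.
  by clear; lia.
have Fle : #|S1 :|: S2 :|: S3| <= ifix 2 (Alt 'I_m).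
  apply: Hfix.
    by rewrite !subUset; apply/andP; split; [apply/andP; split|]; apply/subsetP => P /setIdP[].
  have i2 : forall x y : 'I_m, t @: [set x; y] = [set t x; t y] by move=> x y; rewrite imsetU1 imset_set1.
  have tvo : forall v, v \notin [set a; b; c; d] -> t v = v by [].
  move=> P /setUP[/setUP[]|] /setIdP[/OmP[pP kP] /and4P[g1 g2 g3 g4]].
  - apply: (famB pP kP ab cd g1 g4 tvo).
      by rewrite i2 ta tb !inE setUC eqxx.
    by rewrite i2 tc td !inE [[set d; c]]setUC eqxx orbT.
  - apply: (famB pP kP ac bd g1 g4).
      move=> v hv; apply: tv; move: hv; rewrite !inE.
      by case: (v == a); case: (v == b); case: (v == c); case: (v == d).
      by rewrite i2 ta tc !inE eqxx orbT.
    by rewrite i2 tb td !inE eqxx.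
  - apply: (famB pP kP ad bc g1 g4).
      move=> v hv; apply: tv; move: hv; rewrite !inE.
      by case: (v == a); case: (v == b); case: (v == c); case: (v == d).
      by rewrite i2 ta td !inE eqxx orbT.
    by rewrite i2 tb tc !inE eqxx.
apply: (ifx _ _ Fle); rewrite cS nE.
rewrite N_rec // (N_rec (s := m-2)) //; last by clear -m10; lia.
rewrite !bin1.
have -> : m.-1 = m - 1 by clear; lia.
have -> : (m - 2).-1 = m - 3 by clear; lia.
have -> : m - 2 - 2 = m - 4 by clear; lia.
apply: (Hk2 m _ (N 2 (m - 8))) => //.
  rewrite N_rec //; last by clear -m10; lia.
  rewrite (N_rec (s := m - 4 - 2)) //; last by clear -m10; lia.
  rewrite !bin1.
  have -> : (m - 4).-1 = m - 5 by clear; lia.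
  have -> : (m - 4 - 2).-1 = m - 7 by clear; lia.
  by have -> : m - 4 - 2 - 2 = m - 8 by clear; lia.
have -> : m - 8 = 2 * (r - 4) by rewrite mkr; clear -r5; lia.
exact: N_pos.
Qed.
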